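(* Let $\alpha_1,\alpha_2,\alpha_3>0$ with $\alpha_1^{-2}=\alpha_2^{-2}+\alpha_3^{-2}$, let $a_1=-\alpha_2\alpha_3/\alpha_1$, $a_2=\alpha_3\alpha_1/\alpha_2$, $a_3=\alpha_1\alpha_2/\alpha_3$, and let $T$ be the real $7\times7$ matrix $$T=\begin{pmatrix}0&-\frac{\alpha_1}{2}&\frac{\alpha_2}{2}&\frac{\alpha_3}{2}&\frac{\alpha_1}{2}&-\frac{\alpha_2}{2}&-\frac{\alpha_3}{2}\\ \alpha_1&-2a_1&0&0&0&-\alpha_3&-\alpha_2\\ \alpha_2&0&-2a_2&0&\alpha_3&0&\alpha_1\\ \alpha_3&0&0&-2a_3&\alpha_2&\alpha_1&0\\ -\alpha_1&0&\alpha_3&\alpha_2&2a_1&0&0\\ -\alpha_2&-\alpha_3&0&-\alpha_1&0&2a_2&0\\ -\alpha_3&-\alpha_2&-\alpha_1&0&0&0&2a_3\end{pmatrix}.$$ Let $\mathbf{a}=(0,\alpha_1,\alpha_2,\alpha_3,\alpha_1,\alpha_2,\alpha_3)^{\mathrm T}$ and let $\lambda>0$ with $\lambda^2=a_2^2-a_1a_3$. Then $T\mathbf{a}=0$, and there exist real constants $b_1,\dots,b_5,c_1,\dots,c_5,d_1,\dots,d_6$ such that the nonzero vectors $\mathbf{b}_+=(b_1,b_2,0,b_3,b_4,0,b_5)^{\mathrm T}$, $\mathbf{b}_-=(b_1,b_4,0,b_5,b_2,0,b_3)^{\mathrm T}$, $\mathbf{c}_+=(c_1,0,c_2,c_3,0,c_4,c_5)^{\mathrm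 T}$, $\mathbf{c}_-=(c_1,0,c_4,c_5,0,c_2,c_3)^{\mathrm T}$, $\mathbf{d}_+=(0,d_1,d_2,d_3,d_4,d_5,d_6)^{\mathrm T}$, $\mathbf{d}_-=(0,d_4,d_5,d_6,d_1,d_2,d_3)^{\mathrm T}$ satisfy $T\mathbf{b}_\pm=\pm\lambda\mathbf{b}_\pm$, $T\mathbf{c}_\pm=\pm\lambda\mathbf{c}_\pm$, $T\mathbf{d}_\pm=\pm3\lambda\mathbf{d}_\pm$, and for each choice of sign the pair $\{\mathbf{b}_\pm,\mathbf{c}_\pm\}$ is linearly independent. *)

(* Defs.v *)
From HB Require Import structures.
From mathcomp Require Import all_boot all_order all_algebra.
From mathcomp Require Import reals.
Set Implicit Arguments. Unset Strict Implicit. Unset Printing Implicit Defensive.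
Import Order.TTheory GRing.Theory Num.Theory.
Local Open Scope ring_scope.

Definition vec7 {R : ringType} (x1 x2 x3 x4 x5 x6 x7 : R) : 'cV[R]_7 :=
  \col_(i < 7) nth 0 [:: x1; x2; x3; x4; x5; x6; x7] i.

Definition Tmat {R : realType} (al1 al2 al3 : R) : 'M[R]_7 :=
  let a1 := - (al2 * al3 / al1) in
  let a2 := al3 * al1 / al2 in
  let a3 := al1 * al2 / al3 in
  \matrix_(i < 7, j < 7) nth 0 (nth [::] [::
    [:: 0; - (al1 / 2); al2 / 2; al3 / 2; al1 / 2; - (al2 / 2); - (al3 / 2)];
    [:: al1; - (2 * a1); 0; 0; 0; - al3; - al2];
    [:: al2; 0; - (2 * a2); 0; al3; 0; al1];
    [:: al3; 0; 0; - (2 * a3); al2; al1; 0];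
    [:: - al1; 0; al3; al2; 2 * a1; 0; 0];
    [:: - al2; - al3; 0; - al1; 0; 2 * a2; 0];
    [:: - al3; - al2; - al1; 0; 0; 0; 2 * a3]] i) j.

(* Main.v *)
Require Import Defs.
From HB Require Import structures.
From mathcomp Require Import all_boot all_order all_algebra.
From mathcomp Require Import reals.
From mathcomp Require Import ring lra.
Import Order.TTheory GRing.Theory Num.Theory.
Local Open Scope ring_scope.

Definition Smat {R : realType} (u v w : R) : 'M[R]_7 :=
  \matrix_(i < 7, j < 7) nth 0 (nth [::] [::
    [:: 0; - (v*w / 2); u*w / 2; u*v / 2; v*w / 2; - (u*w / 2); - (u*v / 2)];
    [:: v*w; 2*u^+2; 0; 0; 0; - (u*v); - (u*w)];
    [:: u*w; 0; - (2 * v^+2); 0; u*v; 0; v*w];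
    [:: u*v; 0; 0; - (2*w^+2); u*w; v*w; 0];
    [:: - (v*w); 0; u*v; u*w; - (2*u^+2); 0; 0];
    [:: - (u*w); - (u*v); 0; - (v*w); 0; 2*v^+2; 0];
    [:: - (u*v); - (u*w); - (v*w); 0; 0; 0; 2*w^+2]] i) j.

Lemma TS {R : realType} (u v w : R) : u != 0 -> v != 0 -> w != 0 ->
  Tmat u^-1 v^-1 w^-1 = (u*v*w)^-1 *: Smat u v w.
Proof.
move=> hu hv hw; apply/matrixP=> i j; rewrite !mxE.
case: i => [[|[|[|[|[|[|[|//]]]]]]] Hi]; case: j => [[|[|[|[|[|[|[|//]]]]]]] Hj] /=; field; 
 rewrite ?hu ?hv ?hw //.
Qed.

Definition bp {R : realType} (u v w m : R) : 'cV[R]_7 := vec7 (-(3%:R*v^+3*(v^+2 + 2%:R*w^+2))) (w* (m + v^+2 - w^+2)*((v^+2 + 2%:R*w^+2) + 2%:R* m)) 0 (u* (m + 2%:R*v^+2 + w^+2)*((v^+2 + 2%:R*w^+2) - 2%:R* m)) (w*(v^+2 - w^+2 - m)*((v^+2 + 2%:R*w^+2) - 2%:R* m)) 0 (-(u* (m - 2%:R*v^+2 - w^+2)*((v^+2 + 2%:R*w^+2) + 2%:R* m))).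
Lemma S_bp {R : realType} (u v w m : R) (hc1 : u^+2 - v^+2 - w^+2 = 0)
 (hc2 : m^+2 - (v^+4 + v^+2*w^+2 + w^+4) = 0) :
 Smat u v w *m bp u v w m = m *: bp u v w m.
Proof.
apply/matrixP=> i j; rewrite !mxE !big_ord_recr big_ord0 /= !mxE /=.
case: i => [[|[|[|[|[|[|[|//]]]]]]] Hi] /=.
- apply/eqP; rewrite -subr_eq0; apply/eqP.
  transitivity ((0 - 3%:R * v^+3 * m) * (u^+2 - v^+2 - w^+2) + 0 * (m^+2 - (v^+4 + v^+2*w^+2 + w^+4))).
  + by field.
  + by rewrite hc1 hc2 !mulr0 addr0.
- apply/eqP; rewrite -subr_eq0; apply/eqP.
  transitivity ((6%:R * w * m^+2 - 6%:R * w^+5 + 3%:R * v^+2 * w * m - 3%:R * v^+2 * w^+3) * (u^+2 - v^+2 - w^+2) + (0 - 2%:R * w * m + 6%:R * w^+3 + 3%:R * v^+2 * w) * (m^+2 - (v^+4 + v^+2*w^+2 + w^+4))).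
  + by field.
  + by rewrite hc1 hc2 !mulr0 addr0.
- apply/eqP; rewrite -subr_eq0; apply/eqP.
  transitivity (0 * (u^+2 - v^+2 - w^+2) + 0 * (m^+2 - (v^+4 + v^+2*w^+2 + w^+4))).
  + by field.
  + by rewrite hc1 hc2 !mulr0 addr0.
- apply/eqP; rewrite -subr_eq0; apply/eqP.
  transitivity (0 * (u^+2 - v^+2 - w^+2) + (2%:R * u * m + 6%:R * u * w^+2 + 3%:R * u * v^+2) * (m^+2 - (v^+4 + v^+2*w^+2 + w^+4))).
  + by field.
  + by rewrite hc1 hc2 !mulr0 addr0.
- apply/eqP; rewrite -subr_eq0; apply/eqP.
  transitivity ((0 - 6%:R * w * m^+2 + 6%:R * w^+5 + 3%:R * v^+2 * w * m + 3%:R * v^+2 * w^+3) * (u^+2 - v^+2 - w^+2) + (0 - 2%:R * w * m - 6%:R * w^+3 - 3%:R * v^+2 * w) * (m^+2 - (v^+4 + v^+2*w^+2 + w^+4))).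
  + by field.
  + by rewrite hc1 hc2 !mulr0 addr0.
- apply/eqP; rewrite -subr_eq0; apply/eqP.
  transitivity (0 * (u^+2 - v^+2 - w^+2) + 0 * (m^+2 - (v^+4 + v^+2*w^+2 + w^+4))).
  + by field.
  + by rewrite hc1 hc2 !mulr0 addr0.
- apply/eqP; rewrite -subr_eq0; apply/eqP.
  transitivity (0 * (u^+2 - v^+2 - w^+2) + (2%:R * u * m - 6%:R * u * w^+2 - 3%:R * u * v^+2) * (m^+2 - (v^+4 + v^+2*w^+2 + w^+4))).
  + by field.
  + by rewrite hc1 hc2 !mulr0 addr0.
Qed.

Definition bm {R : realType} (u v w m : R) : 'cV[R]_7 := vec7 (-(3%:R*v^+3*(v^+2 + 2%:R*w^+2))) (w*(v^+2 - w^+2 - m)*((v^+2 + 2%:R*w^+2) - 2%:R* m)) 0 (-(u* (m - 2%:R*v^+2 - w^+2)*((v^+2 + 2%:R*w^+2) + 2%:R* m))) (w* (m + v^+2 - w^+2)*((v^+2 + 2%:R*w^+2) + 2%:R* m)) 0 (u* (m + 2%:R*v^+2 + w^+2)*((v^+2 + 2%:R*w^+2) - 2%:R* m)).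
Lemma S_bm {R : realType} (u v w m : R) (hc1 : u^+2 - v^+2 - w^+2 = 0)
 (hc2 : m^+2 - (v^+4 + v^+2*w^+2 + w^+4) = 0) :
 Smat u v w *m bm u v w m = (- m) *: bm u v w m.
Proof.
apply/matrixP=> i j; rewrite !mxE !big_ord_recr big_ord0 /= !mxE /=.
case: i => [[|[|[|[|[|[|[|//]]]]]]] Hi] /=.
- apply/eqP; rewrite -subr_eq0; apply/eqP.
  transitivity ((3%:R * v^+3 * m) * (u^+2 - v^+2 - w^+2) + 0 * (m^+2 - (v^+4 + v^+2*w^+2 + w^+4))).
  + by field.
  + by rewrite hc1 hc2 !mulr0 addr0.
- apply/eqP; rewrite -subr_eq0; apply/eqP.
  transitivity ((6%:R * w * m^+2 - 6%:R * w^+5 - 3%:R * v^+2 * w * m - 3%:R * v^+2 * w^+3) * (u^+2 - v^+2 - w^+2) + (2%:R * w * m + 6%:R * w^+3 + 3%:R * v^+2 * w) * (m^+2 - (v^+4 + v^+2*w^+2 + w^+4))).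
  + by field.
  + by rewrite hc1 hc2 !mulr0 addr0.
- apply/eqP; rewrite -subr_eq0; apply/eqP.
  transitivity (0 * (u^+2 - v^+2 - w^+2) + 0 * (m^+2 - (v^+4 + v^+2*w^+2 + w^+4))).
  + by field.
  + by rewrite hc1 hc2 !mulr0 addr0.
- apply/eqP; rewrite -subr_eq0; apply/eqP.
  transitivity (0 * (u^+2 - v^+2 - w^+2) + (0 - 2%:R * u * m + 6%:R * u * w^+2 + 3%:R * u * v^+2) * (m^+2 - (v^+4 + v^+2*w^+2 + w^+4))).
  + by field.
  + by rewrite hc1 hc2 !mulr0 addr0.
- apply/eqP; rewrite -subr_eq0; apply/eqP.
  transitivity ((0 - 6%:R * w * m^+2 + 6%:R * w^+5 - 3%:R * v^+2 * w * m + 3%:R * v^+2 * w^+3) * (u^+2 - v^+2 - w^+2) + (2%:R * w * m - 6%:R * w^+3 - 3%:R * v^+2 * w) * (m^+2 - (v^+4 + v^+2*w^+2 + w^+4))).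
  + by field.
  + by rewrite hc1 hc2 !mulr0 addr0.
- apply/eqP; rewrite -subr_eq0; apply/eqP.
  transitivity (0 * (u^+2 - v^+2 - w^+2) + 0 * (m^+2 - (v^+4 + v^+2*w^+2 + w^+4))).
  + by field.
  + by rewrite hc1 hc2 !mulr0 addr0.
- apply/eqP; rewrite -subr_eq0; apply/eqP.
  transitivity (0 * (u^+2 - v^+2 - w^+2) + (0 - 2%:R * u * m - 6%:R * u * w^+2 - 3%:R * u * v^+2) * (m^+2 - (v^+4 + v^+2*w^+2 + w^+4))).
  + by field.
  + by rewrite hc1 hc2 !mulr0 addr0.
Qed.

Definition cp {R : realType} (u v w m : R) : 'cV[R]_7 := vec7 (u*v*w*((v^+2 - w^+2)*(v^+2 - w^+2 + 2%:R* m))) 0 (u*v*w*(u*w* (m - 2%:R*w^+2 - v^+2))) (v*(v*w*((v^+2 - w^+2)*(v^+2 - w^+2 + 2%:R* m)) - u*v*(u*w* (m - 2%:R*w^+2 - v^+2)))) 0 (w*(v*w*((v^+2 - w^+2)*(v^+2 - w^+2 + 2%:R* m)) - u*w*(-(u*v* (m + 2%:R*v^+2 + w^+2))))) (u*v*w*(-(u*v* (m + 2%:R*v^+2 + w^+2)))).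
Lemma S_cp {R : realType} (u v w m : R) (hc1 : u^+2 - v^+2 - w^+2 = 0)
 (hc2 : m^+2 - (v^+4 + v^+2*w^+2 + w^+4) = 0) :
 Smat u v w *m cp u v w m = m *: cp u v w m.
Proof.
apply/matrixP=> i j; rewrite !mxE !big_ord_recr big_ord0 /= !mxE /=.
case: i => [[|[|[|[|[|[|[|//]]]]]]] Hi] /=.
- apply/eqP; rewrite -subr_eq0; apply/eqP.
  transitivity ((0 - (3%:R/2%:R) * u * v * w^+5 + (3%:R/2%:R) * u * v^+5 * w) * (u^+2 - v^+2 - w^+2) + (2%:R * u * v * w^+3 - 2%:R * u * v^+3 * w) * (m^+2 - (v^+4 + v^+2*w^+2 + w^+4))).
  + by field.
  + by rewrite hc1 hc2 !mulr0 addr0.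
- apply/eqP; rewrite -subr_eq0; apply/eqP.
  transitivity (0 * (u^+2 - v^+2 - w^+2) + 0 * (m^+2 - (v^+4 + v^+2*w^+2 + w^+4))).
  + by field.
  + by rewrite hc1 hc2 !mulr0 addr0.
- apply/eqP; rewrite -subr_eq0; apply/eqP.
  transitivity ((0 - 1%:R * v * w^+2 * m^+2 + 1%:R * v * w^+6 + 1%:R * v^+3 * w^+4 + 1%:R * v^+5 * w^+2) * (u^+2 - v^+2 - w^+2) + (0 - 1%:R * v * w^+4 - 1%:R * v^+3 * w^+2) * (m^+2 - (v^+4 + v^+2*w^+2 + w^+4))).
  + by field.
  + by rewrite hc1 hc2 !mulr0 addr0.
- apply/eqP; rewrite -subr_eq0; apply/eqP.
  transitivity ((1%:R * v^+2 * w * m^+2 - 1%:R * v^+2 * w^+3 * m - 2%:R * v^+2 * w^+5 + 1%:R * v^+4 * w * m - 2%:R * v^+4 * w^+3 + 1%:R * v^+6 * w) * (u^+2 - v^+2 - w^+2) + (3%:R * v^+2 * w^+3 - 1%:R * v^+4 * w) * (m^+2 - (v^+4 + v^+2*w^+2 + w^+4))).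
  + by field.
  + by rewrite hc1 hc2 !mulr0 addr0.
- apply/eqP; rewrite -subr_eq0; apply/eqP.
  transitivity (0 * (u^+2 - v^+2 - w^+2) + 0 * (m^+2 - (v^+4 + v^+2*w^+2 + w^+4))).
  + by field.
  + by rewrite hc1 hc2 !mulr0 addr0.
- apply/eqP; rewrite -subr_eq0; apply/eqP.
  transitivity ((0 - 1%:R * v * w^+2 * m^+2 + 1%:R * v * w^+4 * m - 1%:R * v * w^+6 - 1%:R * v^+3 * w^+2 * m + 2%:R * v^+3 * w^+4 + 2%:R * v^+5 * w^+2) * (u^+2 - v^+2 - w^+2) + (1%:R * v * w^+4 - 3%:R * v^+3 * w^+2) * (m^+2 - (v^+4 + v^+2*w^+2 + w^+4))).
  + by field.
  + by rewrite hc1 hc2 !mulr0 addr0.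
- apply/eqP; rewrite -subr_eq0; apply/eqP.
  transitivity ((1%:R * v^+2 * w * m^+2 - 1%:R * v^+2 * w^+5 - 1%:R * v^+4 * w^+3 - 1%:R * v^+6 * w) * (u^+2 - v^+2 - w^+2) + (1%:R * v^+2 * w^+3 + 1%:R * v^+4 * w) * (m^+2 - (v^+4 + v^+2*w^+2 + w^+4))).
  + by field.
  + by rewrite hc1 hc2 !mulr0 addr0.
Qed.

Definition cm {R : realType} (u v w m : R) : 'cV[R]_7 := vec7 (u*v*w*((v^+2 - w^+2)*(v^+2 - w^+2 + 2%:R* m))) 0 (w*(v*w*((v^+2 - w^+2)*(v^+2 - w^+2 + 2%:R* m)) - u*w*(-(u*v* (m + 2%:R*v^+2 + w^+2))))) (u*v*w*(-(u*v* (m + 2%:R*v^+2 + w^+2)))) 0 (u*v*w*(u*w* (m - 2%:R*w^+2 - v^+2))) (v*(v*w*((v^+2 - w^+2)*(v^+2 - w^+2 + 2%:R* m)) - u*v*(u*w* (m - 2%:R*w^+2 - v^+2)))).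
Lemma S_cm {R : realType} (u v w m : R) (hc1 : u^+2 - v^+2 - w^+2 = 0)
 (hc2 : m^+2 - (v^+4 + v^+2*w^+2 + w^+4) = 0) :
 Smat u v w *m cm u v w m = (- m) *: cm u v w m.
Proof.
apply/matrixP=> i j; rewrite !mxE !big_ord_recr big_ord0 /= !mxE /=.
case: i => [[|[|[|[|[|[|[|//]]]]]]] Hi] /=.
- apply/eqP; rewrite -subr_eq0; apply/eqP.
  transitivity (((3%:R/2%:R) * u * v * w^+5 - (3%:R/2%:R) * u * v^+5 * w) * (u^+2 - v^+2 - w^+2) + (0 - 2%:R * u * v * w^+3 + 2%:R * u * v^+3 * w) * (m^+2 - (v^+4 + v^+2*w^+2 + w^+4))).
  + by field.
  + by rewrite hc1 hc2 !mulr0 addr0.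
- apply/eqP; rewrite -subr_eq0; apply/eqP.
  transitivity (0 * (u^+2 - v^+2 - w^+2) + 0 * (m^+2 - (v^+4 + v^+2*w^+2 + w^+4))).
  + by field.
  + by rewrite hc1 hc2 !mulr0 addr0.
- apply/eqP; rewrite -subr_eq0; apply/eqP.
  transitivity ((1%:R * v * w^+2 * m^+2 - 1%:R * v * w^+4 * m + 1%:R * v * w^+6 + 1%:R * v^+3 * w^+2 * m - 2%:R * v^+3 * w^+4 - 2%:R * v^+5 * w^+2) * (u^+2 - v^+2 - w^+2) + (0 - 1%:R * v * w^+4 + 3%:R * v^+3 * w^+2) * (m^+2 - (v^+4 + v^+2*w^+2 + w^+4))).
  + by field.
  + by rewrite hc1 hc2 !mulr0 addr0.
- apply/eqP; rewrite -subr_eq0; apply/eqP.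
  transitivity ((0 - 1%:R * v^+2 * w * m^+2 + 1%:R * v^+2 * w^+5 + 1%:R * v^+4 * w^+3 + 1%:R * v^+6 * w) * (u^+2 - v^+2 - w^+2) + (0 - 1%:R * v^+2 * w^+3 - 1%:R * v^+4 * w) * (m^+2 - (v^+4 + v^+2*w^+2 + w^+4))).
  + by field.
  + by rewrite hc1 hc2 !mulr0 addr0.
- apply/eqP; rewrite -subr_eq0; apply/eqP.
  transitivity (0 * (u^+2 - v^+2 - w^+2) + 0 * (m^+2 - (v^+4 + v^+2*w^+2 + w^+4))).
  + by field.
  + by rewrite hc1 hc2 !mulr0 addr0.
- apply/eqP; rewrite -subr_eq0; apply/eqP.
  transitivity ((1%:R * v * w^+2 * m^+2 - 1%:R * v * w^+6 - 1%:R * v^+3 * w^+4 - 1%:R * v^+5 * w^+2) * (u^+2 - v^+2 - w^+2) + (1%:R * v * w^+4 + 1%:R * v^+3 * w^+2) * (m^+2 - (v^+4 + v^+2*w^+2 + w^+4))).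
  + by field.
  + by rewrite hc1 hc2 !mulr0 addr0.
- apply/eqP; rewrite -subr_eq0; apply/eqP.
  transitivity ((0 - 1%:R * v^+2 * w * m^+2 + 1%:R * v^+2 * w^+3 * m + 2%:R * v^+2 * w^+5 - 1%:R * v^+4 * w * m + 2%:R * v^+4 * w^+3 - 1%:R * v^+6 * w) * (u^+2 - v^+2 - w^+2) + (0 - 3%:R * v^+2 * w^+3 + 1%:R * v^+4 * w) * (m^+2 - (v^+4 + v^+2*w^+2 + w^+4))).
  + by field.
  + by rewrite hc1 hc2 !mulr0 addr0.
Qed.

Definition dp {R : realType} (u v w m : R) : 'cV[R]_7 := vec7 0 (18%:R * v^+2 * w^+8 + 30%:R * v^+4 * w^+6 + 30%:R * v^+6 * w^+4 + 18%:R * v^+8 * w^+2) (0 - 36%:R * u * v * w^+6 * m + 36%:R * u * v * w^+8 - 126%:R * u * v^+3 * w^+4 * m + 138%:R * u * v^+3 * w^+6 - 162%:R * u * v^+5 * w^+2 * m + 246%:R * u * v^+5 * w^+4 - 108%:R * u * v^+7 * m + 216%:R * u * v^+7 * w^+2 + 108%:R * u * v^+9) (0 - 108%:R * u * w^+7 * m + 108%:R * u * w^+9 - 162%:R * u * v^+2 * w^+5 * m + 216%:R * u * v^+2 * w^+7 - 126%:R * u * v^+4 * w^+3 * m + 246%:R * u * v^+4 * w^+5 - 36%:R * u * v^+6 * w * m + 138%:R * u * v^+6 * w^+3 + 36%:R * u * v^+8 * w) (108%:R * w^+8 * m - 108%:R * w^+10 + 360%:R * v^+2 * w^+6 * m -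 414%:R * v^+2 * w^+8 + 504%:R * v^+4 * w^+4 * m - 726%:R * v^+4 * w^+6 + 360%:R * v^+6 * w^+2 * m - 726%:R * v^+6 * w^+4 + 108%:R * v^+8 * m - 414%:R * v^+8 * w^+2 - 108%:R * v^+10) (0 - 36%:R * u * v * w^+6 * m + 36%:R * u * v * w^+8 - 18%:R * u * v^+3 * w^+4 * m + 30%:R * u * v^+3 * w^+6 - 18%:R * u * v^+5 * w^+2 * m + 30%:R * u * v^+5 * w^+4) (0 - 18%:R * u * v^+2 * w^+5 * m - 18%:R * u * v^+4 * w^+3 * m + 30%:R * u * v^+4 * w^+5 - 36%:R * u * v^+6 * w * m + 30%:R * u * v^+6 * w^+3 + 36%:R * u * v^+8 * w).
Lemma S_dp {R : realType} (u v w m : R) (hc1 : u^+2 - v^+2 - w^+2 = 0)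
 (hc2 : m^+2 - (v^+4 + v^+2*w^+2 + w^+4) = 0) :
 Smat u v w *m dp u v w m = (3%:R* m) *: dp u v w m.
Proof.
apply/matrixP=> i j; rewrite !mxE !big_ord_recr big_ord0 /= !mxE /=.
case: i => [[|[|[|[|[|[|[|//]]]]]]] Hi] /=.
- apply/eqP; rewrite -subr_eq0; apply/eqP.
  transitivity ((0 - 54%:R * v * w^+7 * m + 54%:R * v * w^+9 - 126%:R * v^+3 * w^+5 * m + 162%:R * v^+3 * w^+7 - 126%:R * v^+5 * w^+3 * m + 216%:R * v^+5 * w^+5 - 54%:R * v^+7 * w * m + 162%:R * v^+7 * w^+3 + 54%:R * v^+9 * w) * (u^+2 - v^+2 - w^+2) + 0 * (m^+2 - (v^+4 + v^+2*w^+2 + w^+4))).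
  + by field.
  + by rewrite hc1 hc2 !mulr0 addr0.
- apply/eqP; rewrite -subr_eq0; apply/eqP.
  transitivity ((54%:R * v^+2 * w^+6 * m + 36%:R * v^+4 * w^+4 * m + 54%:R * v^+6 * w^+2 * m) * (u^+2 - v^+2 - w^+2) + 0 * (m^+2 - (v^+4 + v^+2*w^+2 + w^+4))).
  + by field.
  + by rewrite hc1 hc2 !mulr0 addr0.
- apply/eqP; rewrite -subr_eq0; apply/eqP.
  transitivity (0 * (u^+2 - v^+2 - w^+2) + (108%:R * u * v * w^+6 + 378%:R * u * v^+3 * w^+4 + 486%:R * u * v^+5 * w^+2 + 324%:R * u * v^+7) * (m^+2 - (v^+4 + v^+2*w^+2 + w^+4))).
  + by field.
  + by rewrite hc1 hc2 !mulr0 addr0.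
- apply/eqP; rewrite -subr_eq0; apply/eqP.
  transitivity (0 * (u^+2 - v^+2 - w^+2) + (324%:R * u * w^+7 + 486%:R * u * v^+2 * w^+5 + 378%:R * u * v^+4 * w^+3 + 108%:R * u * v^+6 * w) * (m^+2 - (v^+4 + v^+2*w^+2 + w^+4))).
  + by field.
  + by rewrite hc1 hc2 !mulr0 addr0.
- apply/eqP; rewrite -subr_eq0; apply/eqP.
  transitivity ((0 - 324%:R * w^+8 * m + 324%:R * w^+10 - 918%:R * v^+2 * w^+6 * m + 1080%:R * v^+2 * w^+8 - 1260%:R * v^+4 * w^+4 * m + 1836%:R * v^+4 * w^+6 - 918%:R * v^+6 * w^+2 * m + 1836%:R * v^+6 * w^+4 - 324%:R * v^+8 * m + 1080%:R * v^+8 * w^+2 + 324%:R * v^+10) * (u^+2 - v^+2 - w^+2) + (0 - 324%:R * w^+8 - 1080%:R * v^+2 * w^+6 - 1512%:R * v^+4 * w^+4 - 1080%:R * v^+6 * w^+2 - 324%:R * v^+8) * (m^+2 - (v^+4 + v^+2*w^+2 + w^+4))).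
  + by field.
  + by rewrite hc1 hc2 !mulr0 addr0.
- apply/eqP; rewrite -subr_eq0; apply/eqP.
  transitivity (0 * (u^+2 - v^+2 - w^+2) + (108%:R * u * v * w^+6 + 54%:R * u * v^+3 * w^+4 + 54%:R * u * v^+5 * w^+2) * (m^+2 - (v^+4 + v^+2*w^+2 + w^+4))).
  + by field.
  + by rewrite hc1 hc2 !mulr0 addr0.
- apply/eqP; rewrite -subr_eq0; apply/eqP.
  transitivity (0 * (u^+2 - v^+2 - w^+2) + (54%:R * u * v^+2 * w^+5 + 54%:R * u * v^+4 * w^+3 + 108%:R * u * v^+6 * w) * (m^+2 - (v^+4 + v^+2*w^+2 + w^+4))).
  + by field.
  + by rewrite hc1 hc2 !mulr0 addr0.
Qed.

Definition dm {R : realType} (u v w m : R) : 'cV[R]_7 := vec7 0 (108%:R * w^+8 * m - 108%:R * w^+10 + 360%:R * v^+2 * w^+6 * m - 414%:R * v^+2 * w^+8 + 504%:R * v^+4 * w^+4 * m - 726%:R * v^+4 * w^+6 + 360%:R * v^+6 * w^+2 * m - 726%:R * v^+6 * w^+4 + 108%:R * v^+8 * m - 414%:R * v^+8 * w^+2 - 108%:R * v^+10) (0 - 36%:R * u * v * w^+6 * m + 36%:R * u * v * w^+8 - 18%:R * u * v^+3 * w^+4 * m + 30%:R * u * v^+3 * w^+6 - 18%:R * u * v^+5 * w^+2 * m + 30%:R * u * v^+5 * w^+4) (0 - 18%:R * u * v^+2 * w^+5 * m - 18%:R * u * v^+4 * w^+3 * m + 30%:R * u * v^+4 * w^+5 -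 36%:R * u * v^+6 * w * m + 30%:R * u * v^+6 * w^+3 + 36%:R * u * v^+8 * w) (18%:R * v^+2 * w^+8 + 30%:R * v^+4 * w^+6 + 30%:R * v^+6 * w^+4 + 18%:R * v^+8 * w^+2) (0 - 36%:R * u * v * w^+6 * m + 36%:R * u * v * w^+8 - 126%:R * u * v^+3 * w^+4 * m + 138%:R * u * v^+3 * w^+6 - 162%:R * u * v^+5 * w^+2 * m + 246%:R * u * v^+5 * w^+4 - 108%:R * u * v^+7 * m + 216%:R * u * v^+7 * w^+2 + 108%:R * u * v^+9) (0 - 108%:R * u * w^+7 * m + 108%:R * u * w^+9 - 162%:R * u * v^+2 * w^+5 * m + 216%:R * u * v^+2 * w^+7 - 126%:R * u * v^+4 * w^+3 * m + 246%:R * u * v^+4 * w^+5 - 36%:R * u * v^+6 * w * m + 138%:R * u * v^+6 * w^+3 + 36%:R * u * v^+8 * w).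
Lemma S_dm {R : realType} (u v w m : R) (hc1 : u^+2 - v^+2 - w^+2 = 0)
 (hc2 : m^+2 - (v^+4 + v^+2*w^+2 + w^+4) = 0) :
 Smat u v w *m dm u v w m = (- (3%:R* m)) *: dm u v w m.
Proof.
apply/matrixP=> i j; rewrite !mxE !big_ord_recr big_ord0 /= !mxE /=.
case: i => [[|[|[|[|[|[|[|//]]]]]]] Hi] /=.
- apply/eqP; rewrite -subr_eq0; apply/eqP.
  transitivity ((54%:R * v * w^+7 * m - 54%:R * v * w^+9 + 126%:R * v^+3 * w^+5 * m - 162%:R * v^+3 * w^+7 + 126%:R * v^+5 * w^+3 * m - 216%:R * v^+5 * w^+5 + 54%:R * v^+7 * w * m - 162%:R * v^+7 * w^+3 - 54%:R * v^+9 * w) * (u^+2 - v^+2 - w^+2) + 0 * (m^+2 - (v^+4 + v^+2*w^+2 + w^+4))).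
  + by field.
  + by rewrite hc1 hc2 !mulr0 addr0.
- apply/eqP; rewrite -subr_eq0; apply/eqP.
  transitivity ((324%:R * w^+8 * m - 324%:R * w^+10 + 918%:R * v^+2 * w^+6 * m - 1080%:R * v^+2 * w^+8 + 1260%:R * v^+4 * w^+4 * m - 1836%:R * v^+4 * w^+6 + 918%:R * v^+6 * w^+2 * m - 1836%:R * v^+6 * w^+4 + 324%:R * v^+8 * m - 1080%:R * v^+8 * w^+2 - 324%:R * v^+10) * (u^+2 - v^+2 - w^+2) + (324%:R * w^+8 + 1080%:R * v^+2 * w^+6 + 1512%:R * v^+4 * w^+4 + 1080%:R * v^+6 * w^+2 + 324%:R * v^+8) * (m^+2 - (v^+4 + v^+2*w^+2 + w^+4))).
  + by field.
  + by rewrite hc1 hc2 !mulr0 addr0.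
- apply/eqP; rewrite -subr_eq0; apply/eqP.
  transitivity (0 * (u^+2 - v^+2 - w^+2) + (0 - 108%:R * u * v * w^+6 - 54%:R * u * v^+3 * w^+4 - 54%:R * u * v^+5 * w^+2) * (m^+2 - (v^+4 + v^+2*w^+2 + w^+4))).
  + by field.
  + by rewrite hc1 hc2 !mulr0 addr0.
- apply/eqP; rewrite -subr_eq0; apply/eqP.
  transitivity (0 * (u^+2 - v^+2 - w^+2) + (0 - 54%:R * u * v^+2 * w^+5 - 54%:R * u * v^+4 * w^+3 - 108%:R * u * v^+6 * w) * (m^+2 - (v^+4 + v^+2*w^+2 + w^+4))).
  + by field.
  + by rewrite hc1 hc2 !mulr0 addr0.
- apply/eqP; rewrite -subr_eq0; apply/eqP.
  transitivity ((0 - 54%:R * v^+2 * w^+6 * m - 36%:R * v^+4 * w^+4 * m - 54%:R * v^+6 * w^+2 * m) * (u^+2 - v^+2 - w^+2) + 0 * (m^+2 - (v^+4 + v^+2*w^+2 + w^+4))).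
  + by field.
  + by rewrite hc1 hc2 !mulr0 addr0.
- apply/eqP; rewrite -subr_eq0; apply/eqP.
  transitivity (0 * (u^+2 - v^+2 - w^+2) + (0 - 108%:R * u * v * w^+6 - 378%:R * u * v^+3 * w^+4 - 486%:R * u * v^+5 * w^+2 - 324%:R * u * v^+7) * (m^+2 - (v^+4 + v^+2*w^+2 + w^+4))).
  + by field.
  + by rewrite hc1 hc2 !mulr0 addr0.
- apply/eqP; rewrite -subr_eq0; apply/eqP.
  transitivity (0 * (u^+2 - v^+2 - w^+2) + (0 - 324%:R * u * w^+7 - 486%:R * u * v^+2 * w^+5 - 378%:R * u * v^+4 * w^+3 - 108%:R * u * v^+6 * w) * (m^+2 - (v^+4 + v^+2*w^+2 + w^+4))).
  + by field.
  + by rewrite hc1 hc2 !mulr0 addr0.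
Qed.

Arguments S_bp {R u v w m}.
Arguments S_bm {R u v w m}.
Arguments S_cp {R u v w m}.
Arguments S_cm {R u v w m}.
Arguments S_dp {R u v w m}.
Arguments S_dm {R u v w m}.

Lemma T_eig {R : realType} (u v w c e : R) (x : 'cV[R]_7) :
  u != 0 -> v != 0 -> w != 0 -> Smat u v w *m x = e *: x -> e = u*v*w*c ->
  Tmat u^-1 v^-1 w^-1 *m x = c *: x.
Proof.
move=> hu hv hw H he; rewrite TS // -scalemxAl H scalerA he; congr (_ *: _).
by field; rewrite hu hv hw.
Qed.
Arguments T_eig {R u v w c e x}.

Lemma free2 {R : realType} (b c : 'cV[R]_7) (i : 'I_7) :
  b != 0 -> b i 0 = 0 -> c i 0 != 0 -> free [:: b; c].
Proof.
move=> hb hbi hci.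
have hc : c != 0 by apply/eqP => c0; move: hci; rewrite c0 mxE eqxx.
rewrite free_cons span_seq1 seq1_free hc andbT.
apply/vlineP => -[k hk]; move: hbi; rewrite hk mxE => /eqP.
rewrite mulf_eq0 (negbTE hci) orbF => /eqP k0.
by move: hb; rewrite hk k0 scale0r eqxx.
Qed.

Lemma entry_ne0 {R : realType} (x : 'cV[R]_7) (i : 'I_7) : x i 0 != 0 -> x != 0.
Proof. by move=> h; apply/eqP => x0; move: h; rewrite x0 mxE eqxx. Qed.
Arguments entry_ne0 {R x} i.
Arguments free2 {R b c} i.

Theorem proposition5p5 (R : realType) (al1 al2 al3 lam : R)
  (h1 : 0 < al1) (h2 : 0 < al2) (h3 : 0 < al3)
  (hal : al1 ^- 2 = al2 ^- 2 + al3 ^- 2)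
  (hlam : 0 < lam)
  (hlam2 : lam ^+ 2 = (al3 * al1 / al2) ^+ 2
                      - (- (al2 * al3 / al1)) * (al1 * al2 / al3)) :
  Tmat al1 al2 al3 *m vec7 0 al1 al2 al3 al1 al2 al3 = 0 /\
  exists (b1 b2 b3 b4 b5 c1 c2 c3 c4 c5 d1 d2 d3 d4 d5 d6 : R),
    let bp := vec7 b1 b2 0 b3 b4 0 b5 in
    let bm := vec7 b1 b4 0 b5 b2 0 b3 in
    let cp := vec7 c1 0 c2 c3 0 c4 c5 in
    let cm := vec7 c1 0 c4 c5 0 c2 c3 in
    let dp := vec7 0 d1 d2 d3 d4 d5 d6 in
    let dm := vec7 0 d4 d5 d6 d1 d2 d3 in
    [/\ bp != 0, bm != 0, cp != 0 & cm != 0] /\ (dp != 0 /\ dm != 0) /\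
    [/\ Tmat al1 al2 al3 *m bp = lam *: bp,
        Tmat al1 al2 al3 *m bm = (- lam) *: bm,
        Tmat al1 al2 al3 *m cp = lam *: cp &
        Tmat al1 al2 al3 *m cm = (- lam) *: cm] /\
    [/\ Tmat al1 al2 al3 *m dp = (3 * lam) *: dp &
        Tmat al1 al2 al3 *m dm = (- (3 * lam)) *: dm] /\
    free [:: bp; cp] /\ free [:: bm; cm].

Proof.
have ha1 : al1 != 0 by rewrite gt_eqF.
have ha2 : al2 != 0 by rewrite gt_eqF.
have ha3 : al3 != 0 by rewrite gt_eqF.
split.
  apply/matrixP=> i j; rewrite !mxE !big_ord_recr big_ord0 /= !mxE /=.
  by case: i => [[|[|[|[|[|[|[|//]]]]]]] Hi] /=; field.
have Te : Tmat al1 al2 al3 = Tmat (al1^-1)^-1 (al2^-1)^-1 (al3^-1)^-1 by rewrite !invrK.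
rewrite Te.
have hup : 0 < al1^-1 by rewrite invr_gt0.
have hvp : 0 < al2^-1 by rewrite invr_gt0.
have hwp : 0 < al3^-1 by rewrite invr_gt0.
have hc1 : (al1^-1)^+2 - (al2^-1)^+2 - (al3^-1)^+2 = 0.
  by rewrite !exprVn hal; ring.
have hc2' : (al1^-1 * al2^-1 * al3^-1 * lam)^+2
   - ((al2^-1)^+4 + (al2^-1)^+2 * (al3^-1)^+2 + (al3^-1)^+4) = 0.
  transitivity ((al3^-1)^+2 * ((al1^-1)^+2 - (al2^-1)^+2 - (al3^-1)^+2)); last by rewrite hc1 mulr0.
  by rewrite exprMn hlam2; field; rewrite ?ha1 ?ha2 ?ha3.
move: hup hvp hwp hc1 hc2'.
move: (al1^-1) (al2^-1) (al3^-1) => u v w hup hvp hwp hc1.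
set m := u * v * w * lam => hc2.
have hu0 : u != 0 by rewrite gt_eqF.
have hv0 : v != 0 by rewrite gt_eqF.
have hw0 : w != 0 by rewrite gt_eqF.
have Ebp := T_eig hu0 hv0 hw0 (S_bp hc1 hc2) (erefl m).
have Ebm := T_eig (c := - lam) hu0 hv0 hw0 (S_bm hc1 hc2) (ltac:(rewrite /m; ring)).
have Ecp := T_eig hu0 hv0 hw0 (S_cp hc1 hc2) (erefl m).
have Ecm := T_eig (c := - lam) hu0 hv0 hw0 (S_cm hc1 hc2) (ltac:(rewrite /m; ring)).
have Edp := T_eig (c := 3 * lam) hu0 hv0 hw0 (S_dp hc1 hc2) (ltac:(rewrite /m; ring)).
have Edm := T_eig (c := - (3 * lam)) hu0 hv0 hw0 (S_dm hc1 hc2) (ltac:(rewrite /m; ring)).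
have hP : 0 < v^+2 + 2%:R * w^+2 by rewrite addr_gt0 // ?mulr_gt0 // ?ltr0n // exprn_gt0.
have hf : m - 2%:R*w^+2 - v^+2 != 0.
  have e : (m - 2%:R*w^+2 - v^+2) * (m + 2%:R*w^+2 + v^+2) = - (3%:R * w^+2 * (v^+2 + w^+2)).
    transitivity ((m^+2 - (v^+4 + v^+2*w^+2 + w^+4)) - 3%:R * w^+2 * (v^+2 + w^+2)); first by ring.
    by rewrite hc2 sub0r.
  apply/eqP => h0; move: e; rewrite h0 mul0r => /eqP; rewrite eq_sym oppr_eq0.
  by rewrite gt_eqF // !mulr_gt0 // ?ltr0n // ?addr_gt0 // exprn_gt0.
have nb : (-(3%:R*v^+3*(v^+2 + 2%:R*w^+2))) != 0.
  by rewrite oppr_eq0 gt_eqF // !mulr_gt0 // ?ltr0n // exprn_gt0.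
have nc : (u*v*w*(u*w* (m - 2%:R*w^+2 - v^+2))) != 0 by rewrite !mulf_neq0.
have nd : (18%:R * v^+2 * w^+8 + 30%:R * v^+4 * w^+6 + 30%:R * v^+6 * w^+4 + 18%:R * v^+8 * w^+2) != 0.
  rewrite gt_eqF // !addr_gt0 // !mulr_gt0 // ?ltr0n // exprn_gt0.
have Nbp : bp u v w m != 0 by apply: (entry_ne0 (ord0)); rewrite mxE.
have Nbm : bm u v w m != 0 by apply: (entry_ne0 (ord0)); rewrite mxE.
have Ncp : cp u v w m != 0 by apply: (entry_ne0 (@Ordinal 7 2 isT)); rewrite mxE.
have Ncm : cm u v w m != 0 by apply: (entry_ne0 (@Ordinal 7 5 isT)); rewrite mxE.
have Ndp : dp u v w m != 0 by apply: (entry_ne0 (@Ordinal 7 1 isT)); rewrite mxE.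
have Ndm : dm u v w m != 0 by apply: (entry_ne0 (@Ordinal 7 4 isT)); rewrite mxE.
have F1 : free [:: bp u v w m; cp u v w m].
  by apply: (free2 (@Ordinal 7 2 isT)) => //; rewrite mxE.
have F2 : free [:: bm u v w m; cm u v w m].
  by apply: (free2 (@Ordinal 7 5 isT)) => //; rewrite mxE.
exists (-(3%:R*v^+3*(v^+2 + 2%:R*w^+2))), (w* (m + v^+2 - w^+2)*((v^+2 + 2%:R*w^+2) + 2%:R* m)), (u* (m + 2%:R*v^+2 + w^+2)*((v^+2 + 2%:R*w^+2) - 2%:R* m)), (w*(v^+2 - w^+2 - m)*((v^+2 + 2%:R*w^+2) - 2%:R* m)), (-(u* (m - 2%:R*v^+2 - w^+2)*((v^+2 + 2%:R*w^+2) + 2%:R* m))), (u*v*w*((v^+2 - w^+2)*(v^+2 - w^+2 + 2%:R* m))), (u*v*w*(u*w* (m - 2%:R*w^+2 - v^+2))), (v*(v*w*((v^+2 - w^+2)*(v^+2 - w^+2 + 2%:R* m)) - u*v*(u*w* (m - 2%:R*w^+2 - v^+2)))), (w*(v*w*((v^+2 - w^+2)*(v^+2 - w^+2 + 2%:R* m)) - u*w*(-(u*v* (m + 2%:R*v^+2 + w^+2))))), (u*v*w*(-(u*v* (m + 2%:R*v^+2 + w^+2)))), (18%:R * v^+2 * w^+8 + 30%:R * v^+4 * w^+6 + 30%:R * v^+6 * w^+4 + 18%:R * v^+8 * w^+2), (0 - 36%:R * u * v * w^+6 * m + 36%:R * u * v * w^+8 - 126%:R * u * v^+3 * w^+4 *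 m + 138%:R * u * v^+3 * w^+6 - 162%:R * u * v^+5 * w^+2 * m + 246%:R * u * v^+5 * w^+4 - 108%:R * u * v^+7 * m + 216%:R * u * v^+7 * w^+2 + 108%:R * u * v^+9), (0 - 108%:R * u * w^+7 * m + 108%:R * u * w^+9 - 162%:R * u * v^+2 * w^+5 * m + 216%:R * u * v^+2 * w^+7 - 126%:R * u * v^+4 * w^+3 * m + 246%:R * u * v^+4 * w^+5 - 36%:R * u * v^+6 * w * m + 138%:R * u * v^+6 * w^+3 + 36%:R * u * v^+8 * w), (108%:R * w^+8 * m - 108%:R * w^+10 + 360%:R * v^+2 * w^+6 * m - 414%:R * v^+2 * w^+8 + 504%:R * v^+4 * w^+4 * m - 726%:R * v^+4 * w^+6 + 360%:R * v^+6 * w^+2 * m - 726%:R * v^+6 * w^+4 + 108%:R * v^+8 * m - 414%:R * v^+8 * w^+2 - 108%:R * v^+10), (0 - 36%:R * u * v * w^+6 * m + 36%:R * u * v * w^+8 - 18%:R * u * v^+3 * w^+4 * m + 30%:R * u * v^+3 * w^+6 - 18%:R * u * v^+5 * w^+2 * m + 30%:R * u * v^+5 * w^+4), (0 - 18%:R * u * v^+2 * w^+5 * m - 18%:R * u * v^+4 * w^+3 * m + 30%:R * u * v^+4 * w^+5 - 36%:R * u * v^+6 * w * m + 30%:R * u * v^+6 * w^+3 + 36%:R * u * v^+8 * w).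
cbv zeta.
by do ![split].
Qed.
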